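(* Let $\mathcal{E}_{\mathrm{MUB}}$ be a set of $2^n+1$ unitaries on $(\mathbb{C}^2)^{\otimes n}$ such that the orthonormal bases $\{U^{\dagger}|\mathbf{b}\rangle:\mathbf{b}\in\{0,1\}^n\}$, $U\in\mathcal{E}_{\mathrm{MUB}}$, form a complete set of mutually unbiased bases. Let $O$ be a Hermitian observable and $O_0=O-\operatorname{tr}(O)\mathbb{I}/2^n$. Then $$\|O_0\|^2_{\mathrm{s},\mathcal{E}_{\mathrm{MUB}}}\le(2^n+1)\operatorname{tr}(O_0^2),\qquad \|O_0\|^2_{\mathrm{ls},\mathcal{E}_{\mathrm{MUB}}}=\frac{2^n+1}{2^n}\operatorname{tr}(O_0^2).$$
   Context: Bases $\{|e_k\rangle\}$ and $\{|f_l\rangle\}$ of $\mathbb{C}^{2^n}$ are mutually unbiased if $|\langle e_k|f_l\rangle|^2=2^{-n}$ for all $k,l$; a complete set consists of $2^n+1$ pairwise mutually unbiased bases. Shadow estimation with ensemble $\mathcal{E}$: given a state $\rho$, pick $U\in\mathcal{E}$ uniformly at random, measure $U\rho U^{\dagger}$ in the computational basis, obtaining $\mathbf{b}$ with probability $\langle\mathbf{b}|U\rho U^{\dagger}|\mathbf{b}\rangle$, and form the snapshot $\hat\rho=\mathcal{M}_{Cl}^{-1}(U^{\dagger}|\mathbf{b}\rangle\langle\mathbf{b}|U)$ where $\mathcal{M}_{Cl}^{-1}(A)=(2^n+1)A-\operatorname{tr}(A)\mathbb{I}$. The shadow norm is $\|O_0\|^2_{\mathrm{s},\mathcal{E}}=\max_{\rho}\mathbb{E}_{U,\mathbf{b}}[\operatorname{tr}(O_0\hat\rho)^2]$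 (maximum over density operators $\rho$), and the locally-scrambled shadow norm $\|O_0\|^2_{\mathrm{ls},\mathcal{E}}$ is the same expectation evaluated at $\rho=\mathbb{I}/2^n$. *)

(* Defs.v *)
(* complex numbers are R[i] (mathcomp-real-closed) over
   R : realType (mathcomp-reals, so that the supremum `sup` is available). *)
From HB Require Import structures.
From mathcomp Require Import all_boot all_order all_algebra.
From mathcomp Require Import spectral.
From mathcomp Require Import complex.
From mathcomp Require Import classical_sets reals.

Set Implicit Arguments.
Unset Strict Implicit.
Unset Printing Implicit Defensive.

Import Order.TTheory GRing.Theory Num.Theory.
Local Open Scope ring_scope.
Local Open Scope sesquilinear_scope.

Section Shadow.
Variable R : realType.
Local Notation C := R[i].
Variable n : nat.
(* Hilbert space dimension 2^n; computational basis |b>, b in {0,1}^n,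
   indexed by 'I_(2^n). *)
Local Notation d := (2 ^ n)%N.

Definition is_hermitian_op (A : 'M[C]_d) : Prop := A ^t* = A.

(* positive semidefinite: <v|A|v> >= 0 for every vector v
   (order on C: nonnegative real) *)
Definition is_psd_op (A : 'M[C]_d) : Prop :=
  forall v : 'cV[C]_d, 0 <= (v ^t* *m A *m v) 0 0.

Definition density (rho : 'M[C]_d) : Prop :=
  is_hermitian_op rho /\ is_psd_op rho /\ \tr rho = 1.

(* Ensemble of 2^n+1 unitaries, indexed by 'I_(2^n).+1, such that the bases
   {U_k^dagger |b>}_b are pairwise mutually unbiased:
   |<U_k^dag b | U_l^dag b'>|^2 = |(U_k U_l^dag)_{b b'}|^2 = 2^-n. *)
Definition MUB_ensemble (U : 'I_d.+1 -> 'M[C]_d) : Prop :=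
  (forall k, U k \is unitarymx) /\
  (forall k l : 'I_d.+1, k != l -> forall b b' : 'I_d,
     `|(U k *m (U l) ^t*) b b'| ^+ 2 = (d%:R)^-1).

(* inverse Clifford measurement channel M_Cl^{-1}(A) = (2^n+1) A - tr(A) I *)
Definition MCl_inv (A : 'M[C]_d) : 'M[C]_d :=
  (d.+1)%:R *: A - (\tr A)%:M.

Definition snapshot (U : 'I_d.+1 -> 'M[C]_d) (k : 'I_d.+1) (b : 'I_d) :
  'M[C]_d := MCl_inv ((U k) ^t* *m delta_mx b b *m U k).

Definition outcome_prob (U : 'I_d.+1 -> 'M[C]_d) (rho : 'M[C]_d)
  (k : 'I_d.+1) (b : 'I_d) : C := (U k *m rho *m (U k) ^t*) b b.

(* E_{U,b}[ tr(O0 rho_hat)^2 ], U uniform over the ensemble *)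
Definition shadow_expect (U : 'I_d.+1 -> 'M[C]_d) (O0 rho : 'M[C]_d) : C :=
  (d.+1)%:R^-1 * \sum_(k < d.+1) \sum_(b < d)
     outcome_prob U rho k b * (\tr (O0 *m snapshot U k b)) ^+ 2.

(* shadow norm squared: maximum (supremum) over density operators; the
   expectations are real for Hermitian O0 and density rho, so we take the
   real part to land in R. *)
Definition shadow_norm_sq (U : 'I_d.+1 -> 'M[C]_d) (O0 : 'M[C]_d) : R :=
  sup [set x : R | exists rho, density rho /\ x = complex.Re (shadow_expect U O0 rho)].

Definition ls_shadow_norm_sq (U : 'I_d.+1 -> 'M[C]_d) (O0 : 'M[C]_d) : C :=
  shadow_expect U O0 ((d%:R)^-1 *: 1%:M).

End Shadow.

(* Main.v *)
Require Import Defs.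
From HB Require Import structures.
From mathcomp Require Import all_boot all_order all_algebra.
From mathcomp Require Import spectral.
From mathcomp Require Import complex.
From mathcomp Require Import classical_sets reals.
Import Order.TTheory GRing.Theory Num.Theory.
Local Open Scope ring_scope.

Module Aux.
Local Open Scope sesquilinear_scope.
Section Key.
Variable C : numClosedFieldType.

Lemma adjM p q r (A : 'M[C]_(p, q)) (B : 'M[C]_(q, r)) :
  (A *m B)^t* = B^t* *m A^t*.
Proof. by rewrite trmx_mul map_mxM. Qed.

Lemma adjD p q (A B : 'M[C]_(p, q)) : (A + B)^t* = A^t* + B^t*.
Proof. by rewrite linearD /= map_mxD. Qed.

Lemma adjZ p q a (A : 'M[C]_(p, q)) : (a *: A)^t* = a^* *: A^t*.
Proof. by rewrite linearZ /= map_mxZ. Qed.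

Lemma adj_scalar p (a : C) : (a%:M : 'M[C]_p)^t* = (a^*)%:M.
Proof. by rewrite tr_scalar_mx map_scalar_mx. Qed.

Lemma adj_delta p q (i : 'I_p) (j : 'I_q) : (delta_mx i j : 'M[C]_(p, q))^t* = delta_mx j i.
Proof. by rewrite trmx_delta map_delta_mx. Qed.

Lemma tr_adj p (A : 'M[C]_p) : \tr (A^t*) = (\tr A)^*.
Proof. by rewrite trace_map_mx mxtrace_tr. Qed.

Lemma tr_delta_r p (A : 'M[C]_p) i j : \tr (A *m delta_mx i j) = A j i.
Proof.
rewrite /mxtrace (bigD1 j) //= big1 => [|k kj].
  by rewrite !mxE (bigD1 i) //= big1 => [|r ri]; rewrite !mxE ?eqxx ?mulr1 ?addr0 // (negbTE ri) mulr0.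
rewrite !mxE big1 // => r _; rewrite !mxE (negbTE kj) andbF mulr0 //.
Qed.

Lemma tr_delta_l p (A : 'M[C]_p) i j : \tr (delta_mx i j *m A) = A j i.
Proof. by rewrite mxtrace_mulC tr_delta_r. Qed.

Lemma trdelta p (i j : 'I_p) : \tr (delta_mx i j : 'M[C]_p) = (i == j)%:R.
Proof. by rewrite -[delta_mx i j]mulmx1 tr_delta_l mxE eq_sym. Qed.

Lemma conj_delta_entry p (W : 'M[C]_p) b b' :
  (W *m delta_mx b' b' *m W^t*) b b = W b b' * (W b b')^*.
Proof.
rewrite mxE (bigD1 b') //= big1 => [|j jb]; last first.
  by rewrite mxE big1 ?mul0r // => k _; rewrite mxE (negbTE jb) andbF mulr0.
rewrite addr0 !mxE (bigD1 b') //= big1 => [|k kb]; last by rewrite mxE (negbTE kb) mulr0.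
by rewrite mxE !eqxx mulr1 addr0.
Qed.
End Key.

Section Design.
Variable C : numClosedFieldType.
Variable m : nat.
Hypothesis m_gt0 : (0 < m)%N.
Variable U : 'I_m.+1 -> 'M[C]_m.
Hypothesis Hunit : forall k, U k \is unitarymx.
Hypothesis Hmub : forall k l, k != l -> forall b b' : 'I_m,
  `|(U k *m (U l)^t*) b b'| ^+ 2 = (m%:R)^-1.

Definition P k b : 'M[C]_m := (U k)^t* *m delta_mx b b *m U k.

Lemma UUt k : U k *m (U k)^t* = 1%:M.
Proof. exact/unitarymxP. Qed.

Lemma UtU k : (U k)^t* *m U k = 1%:M.
Proof.
have := Hunit k; rewrite -trmxC_unitary => /unitarymxP.
by rewrite trmxCK.
Qed.

Lemma P_herm k b : (P k b)^t* = P k b.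
Proof. by rewrite /P !adjM trmxCK adj_delta mulmxA. Qed.

Lemma trPA k b A : \tr (P k b *m A) = (U k *m A *m (U k)^t*) b b.
Proof.
rewrite /P -!mulmxA mxtrace_mulC -!mulmxA tr_delta_l.
by rewrite !mulmxA.
Qed.

Lemma trP k b : \tr (P k b) = 1.
Proof. by rewrite -[P k b]mulmx1 trPA mulmx1 UUt mxE eqxx. Qed.

Lemma m_neq0 : (m%:R : C) != 0.
Proof. by rewrite pnatr_eq0 -lt0n. Qed.

Lemma trPP k l b b' :
  \tr (P k b *m P l b') = if k == l then (b == b')%:R else (m%:R)^-1.
Proof.
rewrite trPA /P !mulmxA -(mulmxA _ (U l)).
have -> : U l *m (U k)^t* = (U k *m (U l)^t*)^t* by rewrite adjM trmxCK.
case: eqP => [<-|/eqP kl].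
  by rewrite UUt mul1mx adj_scalar conjC1 mulmx1 mxE andbb.
by rewrite conj_delta_entry -normCK Hmub.
Qed.

Lemma sumP k : \sum_b P k b = 1%:M.
Proof.
rewrite /P -mulmx_suml -mulmx_sumr.
have -> : \sum_(b < m) (delta_mx b b : 'M[C]_m) = 1%:M.
  rewrite [RHS]matrix_sum_delta; apply: eq_bigr => i _.
  rewrite (bigD1 i) //= big1 => [|j ji]; first by rewrite mxE eqxx scale1r addr0.
  by rewrite mxE eq_sym (negbTE ji) scale0r.
by rewrite mulmx1 UtU.
Qed.


Definition N (A : 'M[C]_m) : 'M[C]_m :=
  \sum_k \sum_b \tr (P k b *m A) *: P k b.
Definition Phi (A : 'M[C]_m) : 'M[C]_m := N A - (\tr A)%:M - A.

Lemma ND A B : N (A + B) = N A + N B.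
Proof.
rewrite /N -big_split; apply: eq_bigr => k _ /=.
rewrite -big_split; apply: eq_bigr => b _ /=.
by rewrite mulmxDr mxtraceD scalerDl.
Qed.

Lemma NZ a A : N (a *: A) = a *: N A.
Proof.
rewrite /N scaler_sumr; apply: eq_bigr => k _ /=.
rewrite scaler_sumr; apply: eq_bigr => b _ /=.
by rewrite -scalemxAr mxtraceZ scalerA.
Qed.

Lemma PhiD A B : Phi (A + B) = Phi A + Phi B.
Proof.
rewrite /Phi ND mxtraceD raddfD /= !opprD.
by rewrite [N A + N B + _]addrACA [LHS]addrACA.
Qed.

Lemma PhiZ a A : Phi (a *: A) = a *: Phi A.
Proof.
by rewrite /Phi NZ mxtraceZ !scalerBr -scale_scalar_mx.
Qed.

Lemma Phi0 : Phi 0 = 0.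
Proof. by rewrite -(scale0r (0 : 'M[C]_m)) PhiZ !scale0r. Qed.

Lemma PhiN A : Phi (- A) = - Phi A.
Proof. by rewrite -scaleN1r PhiZ scaleN1r. Qed.

Lemma Phi_sum (I : Type) (r : seq I) (Q : pred I) (F : I -> 'M[C]_m) :
  Phi (\sum_(i <- r | Q i) F i) = \sum_(i <- r | Q i) Phi (F i).
Proof. exact: (big_morph Phi PhiD Phi0). Qed.

Lemma N_P l b' : N (P l b') = P l b' + 1%:M.
Proof.
rewrite /N (bigD1 l) //=; congr (_ + _).
  under eq_bigr => b _ do rewrite trPP eqxx.
  rewrite (bigD1 b') //= eqxx scale1r big1 ?addr0 // => b bb.
  by rewrite (negbTE bb) scale0r.
under eq_bigr => k kl.
  under eq_bigr => b _ do rewrite trPP (negbTE kl).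
  rewrite -scaler_sumr sumP.
  over.
by rewrite /= sumr_const cardC1 card_ord /= -scaler_nat scalerA divff ?scale1r // m_neq0.
Qed.

Lemma Phi_P l b : Phi (P l b) = 0.
Proof. by rewrite /Phi N_P trP addrK subrr. Qed.

Lemma Phi1 : Phi 1%:M = 0.
Proof. by rewrite -(sumP ord0) Phi_sum big1 // => b _; rewrite Phi_P. Qed.

Lemma Phi_N A : Phi (N A) = 0.
Proof.
rewrite /N Phi_sum big1 // => k _; rewrite Phi_sum big1 // => b _.
by rewrite PhiZ Phi_P scaler0.
Qed.

Lemma PhiPhi A : Phi (Phi A) = - Phi A.
Proof.
rewrite {2}/Phi !PhiD !PhiN Phi_N -scalemx1 PhiZ Phi1 scaler0.
by rewrite subr0 add0r.
Qed.


Lemma tr_sum (I : Type) (r : seq I) (Q : pred I) (F : I -> 'M[C]_m) :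
  \tr (\sum_(i <- r | Q i) F i) = \sum_(i <- r | Q i) \tr (F i).
Proof. exact: (big_morph _ (@mxtraceD _ _) (mxtrace0 _ _)). Qed.

Definition hs (X Y : 'M[C]_m) : C := \tr (X^t* *m Y).

Lemma hs_conj X Y : hs X Y = (hs Y X)^*.
Proof. by rewrite /hs -tr_adj adjM trmxCK. Qed.

Lemma hs_scalar X a : hs X a%:M = a * (\tr X)^*.
Proof. by rewrite /hs -scalemx1 -scalemxAr mulmx1 linearZ /= tr_adj. Qed.

Lemma hs_N X Y : hs X (N Y) = \sum_k \sum_b \tr (P k b *m Y) * (\tr (P k b *m X))^*.
Proof.
rewrite /hs /N mulmx_sumr tr_sum; apply: eq_bigr => k _.
rewrite mulmx_sumr tr_sum; apply: eq_bigr => b _.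
by rewrite -scalemxAr mxtraceZ -{2}(P_herm k b) -adjM tr_adj.
Qed.

Lemma hsB X Y Z : hs X (Y - Z) = hs X Y - hs X Z.
Proof. by rewrite /hs mulmxBr raddfB. Qed.

Lemma hsN X Y : hs X (- Y) = - hs X Y.
Proof. by rewrite /hs mulmxN raddfN. Qed.

Lemma hs_Phi X Y : hs X (Phi Y) =
  \sum_k \sum_b \tr (P k b *m Y) * (\tr (P k b *m X))^* - \tr Y * (\tr X)^* - hs X Y.
Proof. by rewrite /Phi !hsB hs_N hs_scalar. Qed.

Lemma Phi_selfadj X Y : hs (Phi X) Y = hs X (Phi Y).
Proof.
rewrite hs_conj hs_Phi !rmorphB /= rmorph_sum /= hs_Phi -hs_conj.
congr (_ - _ - _).
  apply: eq_bigr => k _; rewrite rmorph_sum; apply: eq_bigr => b _.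
  by rewrite rmorphM /= conjCK mulrC.
by rewrite rmorphM /= conjCK mulrC.
Qed.

Lemma hs_delta i j M : hs (delta_mx i j) M = M i j.
Proof. by rewrite /hs adj_delta tr_delta_l. Qed.

Lemma hs_expand M : hs M M = \sum_i \sum_j (M j i)^* * M j i.
Proof.
rewrite /hs /mxtrace; apply: eq_bigr => i _; rewrite mxE.
by apply: eq_bigr => j _; rewrite !mxE.
Qed.

Lemma hs_ge0 M : 0 <= hs M M.
Proof.
rewrite hs_expand; apply: sumr_ge0 => i _; apply: sumr_ge0 => j _.
by rewrite mulrC mul_conjC_ge0.
Qed.

Lemma hs_eq0 M : hs M M = 0 -> M = 0.
Proof.
rewrite hs_expand => H; apply/matrixP => j i; rewrite mxE.
have ge0 : forall (x : C), 0 <= x^* * x by move=> x; rewrite mulrC mul_conjC_ge0.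
have H1 := psumr_eq0P (fun i (_ : true) => sumr_ge0 _ (fun j (_ : true) => ge0 (M j i))) H.
have H2 := psumr_eq0P (fun j (_ : true) => ge0 (M j i)) (H1 i isT).
have H3 := H2 j isT.
by apply/eqP; rewrite -mul_conjC_eq0 mulrC H3.
Qed.


Lemma N_entry A i j :
  (N A) i j = \sum_k \sum_b \tr (P k b *m A) * P k b i j.
Proof.
rewrite /N summxE; apply: eq_bigr => k _; rewrite summxE.
by apply: eq_bigr => b _; rewrite mxE.
Qed.

Lemma trPhi : \sum_i \sum_j (Phi (delta_mx i j)) i j = 0.
Proof.
have S1 : \sum_i \sum_j (N (delta_mx i j)) i j = (m.+1 * m)%:R.
  have -> : \sum_i \sum_j (N (delta_mx i j)) i j =
      \sum_(k < m.+1) \sum_(b < m) \sum_i \sum_j P k b j i * P k b i j.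
    under eq_bigr => i _ do under eq_bigr => j _ do rewrite N_entry.
    under eq_bigr => i _ do under eq_bigr => j _ do
      under eq_bigr => k _ do under eq_bigr => b _ do rewrite tr_delta_r.
    under eq_bigr => i _ do rewrite exchange_big /=.
    rewrite exchange_big /=; apply: eq_bigr => k _.
    under eq_bigr => i _ do rewrite exchange_big /=.
    by rewrite exchange_big /=.
  have E : forall k b, \sum_i \sum_j P k b j i * P k b i j = 1.
    move=> k b; transitivity (\tr (P k b *m P k b)); last by rewrite trPP !eqxx.
    rewrite /mxtrace; apply: eq_bigr => i _.
    by rewrite mxE; apply: eq_bigr => j _; rewrite mulrC.
  under eq_bigr => k _ do under eq_bigr => b _ do rewrite E.
  by rewrite /= sumr_const card_ord sumr_const card_ord -mulrnA mulnC.
have S2 : \sum_i \sum_j (\tr (delta_mx i j : 'M[C]_m)) *+ (i == j) = m%:R.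
  rewrite -[X in _ = X]mulr1n -[m in X in _ = X]card_ord -sumr_const.
  apply: eq_bigr => i _; rewrite (bigD1 i) //= big1 => [|j ji].
    by rewrite trdelta !eqxx addr0.
  by rewrite eq_sym (negbTE ji) mulr0n.
have S3 : \sum_(i < m) \sum_(j < m) ((i == i) && (j == j))%:R = (m * m)%:R :> C.
  under eq_bigr => i _ do under eq_bigr => j _ do rewrite !eqxx.
  by rewrite sumr_const card_ord sumr_const card_ord -mulrnA.
under eq_bigr => i _ do under eq_bigr => j _ do rewrite /Phi !mxE.
under eq_bigr => i _ do rewrite !sumrB.
rewrite !sumrB S1 S2 S3.
by rewrite mulSn natrD addrAC addrK subrr.
Qed.


Lemma Phi_delta i j : Phi (delta_mx i j) = 0.
Proof.
have H : \sum_i \sum_j hs (Phi (delta_mx i j)) (Phi (delta_mx i j)) = 0.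
  under eq_bigr => i' _ do under eq_bigr => j' _ do
    rewrite Phi_selfadj PhiPhi hsN hs_delta.
  by under eq_bigr => i' _ do rewrite sumrN; rewrite sumrN trPhi oppr0.
have H1 := psumr_eq0P (fun i (_ : true) => sumr_ge0 _ (fun j (_ : true) => hs_ge0 (Phi (delta_mx i j)))) H.
have H2 := psumr_eq0P (fun j (_ : true) => hs_ge0 (Phi (delta_mx i j))) (H1 i isT).
exact: hs_eq0 (H2 j isT).
Qed.

Lemma Phi_zero A : Phi A = 0.
Proof.
rewrite (matrix_sum_delta A) Phi_sum big1 // => i _.
by rewrite Phi_sum big1 // => j _; rewrite PhiZ Phi_delta scaler0.
Qed.

Lemma design O : \tr O = 0 ->
  \tr (O *m O) = \sum_k \sum_b (\tr (P k b *m O)) ^+ 2.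
Proof.
move=> trO.
have NO : N O = O.
  have := Phi_zero O; rewrite /Phi trO (raddf0 (@scalar_mx _ m)) subr0.
  by move/eqP; rewrite subr_eq0 => /eqP.
rewrite -{2}NO /N mulmx_sumr tr_sum; apply: eq_bigr => k _.
rewrite mulmx_sumr tr_sum; apply: eq_bigr => b _.
by rewrite -scalemxAr mxtraceZ mxtrace_mulC expr2.
Qed.

End Design.

Section Main.
Variable R : realType.
Variable n : nat.
Local Notation d := (2 ^ n)%N.
Variable U : 'I_d.+1 -> 'M[R[i]]_d.
Hypothesis HU : MUB_ensemble U.
Variable O0 : 'M[R[i]]_d.
Hypothesis trO0 : \tr O0 = 0.
Hypothesis hermO0 : O0^t* = O0.

Let d_gt0 : (0 < d)%N. Proof. by rewrite expn_gt0. Qed.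
Let PP := @P _ _ U.

Lemma tr_snap k b :
  \tr (O0 *m snapshot U k b) = d.+1%:R * \tr (PP k b *m O0).
Proof.
rewrite /snapshot /MCl_inv mulmxBr raddfB /= -scalemxAr mxtraceZ.
by rewrite mul_mx_scalar mxtraceZ trO0 mulr0 subr0 mxtrace_mulC.
Qed.

Lemma expectE rho : shadow_expect U O0 rho =
  d.+1%:R * \sum_k \sum_b outcome_prob U rho k b * (\tr (PP k b *m O0)) ^+ 2.
Proof.
rewrite /shadow_expect.
under eq_bigr => k _ do under eq_bigr => b _ do rewrite tr_snap exprMn mulrCA.
under eq_bigr => k _ do rewrite -mulr_sumr.
by rewrite -mulr_sumr expr2 mulrA mulKf // pnatr_eq0.
Qed.

Let Hunit : forall k, U k \is unitarymx. Proof. by case: HU. Qed.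
Let Hmub := proj2 HU.

Lemma designO : \tr (O0 *m O0) = \sum_k \sum_b (\tr (PP k b *m O0)) ^+ 2.
Proof. exact: (@design _ _ d_gt0 U Hunit Hmub O0 trO0). Qed.

Lemma probE rho k b : outcome_prob U rho k b = \tr (PP k b *m rho).
Proof. by rewrite /PP trPA. Qed.

Lemma ls_part : ls_shadow_norm_sq U O0 = d.+1%:R / d%:R * \tr (O0 *m O0).
Proof.
rewrite /ls_shadow_norm_sq expectE designO -[in RHS]mulrA; congr (_ * _); rewrite mulr_sumr.
apply: eq_bigr => k _; rewrite mulr_sumr; apply: eq_bigr => b _.
rewrite /outcome_prob -scalemxAr mulmx1 -scalemxAl (@UUt _ _ U Hunit).
by rewrite mxE mxE eqxx mulr1.
Qed.

Lemma x_real k b : (\tr (PP k b *m O0))^* = \tr (PP k b *m O0).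
Proof.
by rewrite -tr_adj adjM hermO0 /PP P_herm mxtrace_mulC.
Qed.

Lemma x2_ge0 k b : 0 <= (\tr (PP k b *m O0)) ^+ 2.
Proof. by rewrite expr2 -{2}x_real mul_conjC_ge0. Qed.

Lemma trOO_ge0 : 0 <= \tr (O0 *m O0).
Proof.
by rewrite designO; apply: sumr_ge0 => k _; apply: sumr_ge0 => b _; apply: x2_ge0.
Qed.

Lemma entry_delta (M : 'M[R[i]]_d) i j :
  ((delta_mx 0 i : 'M[R[i]]_(1, d)) *m M *m (delta_mx j 0 : 'M[R[i]]_(d, 1))) 0 0 = M i j.
Proof. by rewrite -rowE -colE !mxE. Qed.

Lemma entry_delta3 (A B D : 'M[R[i]]_d) i j :
  ((delta_mx 0 i : 'M[R[i]]_(1, d)) *m A *m B *m D *m (delta_mx j 0 : 'M[R[i]]_(d, 1))) 0 0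
  = (A *m B *m D) i j.
Proof. by rewrite -entry_delta !mulmxA. Qed.

Lemma prob_ge0 rho : density rho -> forall k b, 0 <= outcome_prob U rho k b.
Proof.
move=> [_ [psd _]] k b.
have := psd ((U k)^t* *m delta_mx b 0).
rewrite adjM trmxCK adj_delta !mulmxA.
by rewrite entry_delta3.
Qed.

Lemma prob_sum rho : density rho -> forall k, \sum_b outcome_prob U rho k b = 1.
Proof.
move=> [_ [_ tr1]] k.
rewrite /outcome_prob -[LHS]/(\tr _) mxtrace_mulC mulmxA (@UtU _ _ U Hunit).
by rewrite mul1mx.
Qed.

Lemma prob_le1 rho : density rho -> forall k b, outcome_prob U rho k b <= 1.
Proof.
move=> Hr k b; rewrite -(prob_sum rho Hr k) (bigD1 b) //= lerDl.
by apply: sumr_ge0 => b' _; apply: prob_ge0.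
Qed.

Lemma expect_le rho : density rho ->
  shadow_expect U O0 rho <= d.+1%:R * \tr (O0 *m O0).
Proof.
move=> Hr; rewrite expectE designO; apply: ler_wpM2l; first exact: ler0n.
apply: ler_sum => k _; apply: ler_sum => b _.
by apply: ler_piMl; [apply: x2_ge0 | apply: prob_le1].
Qed.

Lemma density0 : density ((d%:R)^-1 *: (1%:M : 'M[R[i]]_d)).
Proof.
split; [|split].
- rewrite /is_hermitian_op adjZ adj_scalar conjC1 fmorphV /= conjC_nat //.
- move=> v; rewrite -scalemxAr mulmx1 -scalemxAl mxE.
  apply: mulr_ge0; first by rewrite invr_ge0 ler0n.
  by rewrite mxE; apply: sumr_ge0 => i _; rewrite !mxE mulrC mul_conjC_ge0.
- by rewrite mxtraceZ mxtrace1 mulVf // pnatr_eq0 -lt0n.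
Qed.

End Main.

End Aux.

Theorem theorem1 (R : realType) (n : nat)
  (U : 'I_(2 ^ n).+1 -> 'M[R[i]]_(2 ^ n)) (Obs : 'M[R[i]]_(2 ^ n)) :
  MUB_ensemble U -> is_hermitian_op Obs ->
  let O0 := Obs - (\tr Obs / (2 ^ n)%N%:R)%:M in
  ((shadow_norm_sq U O0)%:C%C <= ((2 ^ n).+1)%N%:R * \tr (O0 *m O0)) /\
  ls_shadow_norm_sq U O0 = ((2 ^ n).+1)%N%:R / (2 ^ n)%N%:R * \tr (O0 *m O0).
Proof.
move=> HU Hh O0.
have d_gt0 : (0 < 2 ^ n)%N by rewrite expn_gt0.
have dn0 : ((2 ^ n)%N%:R : R[i]) != 0 by rewrite pnatr_eq0 -lt0n.
have trO0 : \tr O0 = 0.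
  by rewrite /O0 mxtraceD raddfN /= mxtrace_scalar -[X in _ - X]mulr_natr divfK // subrr.
have hermO0 : is_hermitian_op O0.
  rewrite /is_hermitian_op /O0 Aux.adjD Hh; congr (_ + _).
  rewrite linearN /= map_mxN Aux.adj_scalar; congr (- _%:M).
  rewrite fmorph_div /= conjC_nat -Aux.tr_adj Hh //.
split; last exact (Aux.ls_part _ _ _ HU _ trO0).
have bge0 : 0 <= ((2 ^ n).+1)%N%:R * \tr (O0 *m O0).
  by apply: mulr_ge0; [exact: ler0n | exact: (Aux.trOO_ge0 _ _ _ HU _ trO0 hermO0)].
have ImB : complex.Im (((2 ^ n).+1)%N%:R * \tr (O0 *m O0)) = 0.
  by move: bge0; rewrite lecE => /andP[/eqP -> _].
have supB : shadow_norm_sq U O0 <= complex.Re (((2 ^ n).+1)%N%:R * \tr (O0 *m O0)).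
  apply: ge_sup.
    by exists (complex.Re (shadow_expect U O0 ((2 ^ n)%N%:R^-1 *: 1%:M)));
      exists ((2 ^ n)%N%:R^-1 *: 1%:M); split => //; exact: Aux.density0.
  move=> y [rho [Hr ->]].
  by have := Aux.expect_le _ _ _ HU _ trO0 hermO0 _ Hr; rewrite lecE => /andP[_ ->].
by rewrite lecE /= ImB eqxx supB.
Qed.
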